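(* For any ordinal $\zeta$ of uncountable cofinality, there exists a class map $\psi_\zeta:\mathrm{Ord}\rightarrow\mathrm{cf}(\zeta)$ satisfying the following. For every ordinal $\alpha$ with $\mathrm{cf}(\alpha)=\mathrm{cf}(\zeta)$, every function $f:\alpha\rightarrow\mathrm{Ord}$ and every stationary $s\subseteq\alpha$ such that $f\restriction s$ is strictly increasing and converging to $\zeta$, there exists a club $c\subseteq\alpha$ such that $(\psi_\zeta\circ f)\restriction(c\cap s)$ is strictly increasing. *)

(* Defs.v *)
(* Ordinals are modelled as elements of an arbitrary
   well-ordered type (W, lt), i.e. an initial segment of Ord large enough
   to contain all ordinals under consideration. *)
From Stdlib Require Import Relations Wellfounded.

Section Ords.
Variable W : Type.
Variable lt : W -> W -> Prop.

Definition is_wellorder : Prop :=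
  well_founded lt /\
  (forall x y z, lt x y -> lt y z -> lt x z) /\
  (forall x, ~ lt x x) /\
  (forall x y, lt x y \/ x = y \/ lt y x).

Definition le (x y : W) : Prop := lt x y \/ x = y.

Definition cofinal_map_exists (delta zeta : W) : Prop :=
  exists g : W -> W,
    (forall i, lt i delta -> lt (g i) zeta) /\
    (forall x, lt x zeta -> exists i, lt i delta /\ le x (g i)).

Definition is_cf (zeta delta : W) : Prop :=
  cofinal_map_exists delta zeta /\
  (forall d, lt d delta -> ~ cofinal_map_exists d zeta).

Definition uncountable_cof (zeta : W) : Prop :=
  (exists x, lt x zeta) /\
  ~ (exists g : nat -> W,
        (forall n, lt (g n) zeta) /\
        (forall x, lt x zeta -> exists n, le x (g n))).

Definition unbounded_in (alpha : W) (c : W -> Prop) : Prop :=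
  forall x, lt x alpha -> exists y, c y /\ le x y /\ lt y alpha.

Definition closed_in (alpha : W) (c : W -> Prop) : Prop :=
  forall gamma, lt gamma alpha ->
    (exists x, lt x gamma) ->
    (forall x, lt x gamma -> exists y, c y /\ lt x y /\ lt y gamma) ->
    c gamma.

Definition club (alpha : W) (c : W -> Prop) : Prop :=
  (forall x, c x -> lt x alpha) /\ unbounded_in alpha c /\ closed_in alpha c.

Definition stationary (alpha : W) (s : W -> Prop) : Prop :=
  (forall x, s x -> lt x alpha) /\
  (forall c, club alpha c -> exists x, c x /\ s x).

Definition strictly_increasing_on (s : W -> Prop) (f : W -> W) : Prop :=
  forall x y, s x -> s y -> lt x y -> lt (f x) (f y).

Definition converges_to_on (s : W -> Prop) (f : W -> W) (zeta : W) : Prop :=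
  (forall x, s x -> le (f x) zeta) /\
  (forall y, lt y zeta -> exists x, s x /\ lt y (f x)).

End Ords.

(* Main.v *)
Require Import Defs.
From Stdlib Require Import Classical ClassicalEpsilon.

Lemma wf_min (W:Type)(lt:W->W->Prop)(Hwf: well_founded lt)(P:W->Prop) :
  (exists x, P x) -> exists m, P m /\ forall y, lt y m -> ~ P y.
Proof.
  intros [x Hx]. revert Hx. induction x as [x IH] using (well_founded_ind Hwf).
  intros Hx. destruct (classic (exists y, lt y x /\ P y)) as [[y [Hy Py]]|Hn].
  - exact (IH y Hy Py).
  - exists x. split; auto. intros y Hy Py. apply Hn; eauto.
Qed.

Theorem lemma3p4 (W : Type) (lt : W -> W -> Prop) (Hwo : is_wellorder W lt)
  (zeta delta : W) (Hcf : is_cf W lt zeta delta)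
  (Hunc : uncountable_cof W lt zeta) :
  exists psi : W -> W,
    (forall x, lt (psi x) delta) /\
    (forall (alpha : W), is_cf W lt alpha delta ->
     forall (f : W -> W) (s : W -> Prop),
       stationary W lt alpha s ->
       strictly_increasing_on W lt s f ->
       converges_to_on W lt s f zeta ->
       exists c, club W lt alpha c /\
         strictly_increasing_on W lt (fun x => c x /\ s x) (fun x => psi (f x))).
Proof.
  destruct Hwo as (Hwf & Htr & Hirr & Htri).
  assert (lele: forall a b c, Defs.le W lt a b -> Defs.le W lt b c -> Defs.le W lt a c).
  { unfold Defs.le; intros a b c H H0; destruct H, H0; subst; eauto. }
  assert (ltle: forall a b c, lt a b -> Defs.le W lt b c -> lt a c).
  { unfold Defs.le; intros a b c H H0; destruct H0; subst; eauto. }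
  assert (lelt: forall a b c, Defs.le W lt a b -> lt b c -> lt a c).
  { unfold Defs.le; intros a b c H H0; destruct H; subst; eauto. }
  assert (notle: forall a b, lt a b -> Defs.le W lt b a -> False).
  { intros a b H [H'|H']; subst; eauto. apply (Hirr a); eauto. apply (Hirr a); auto. }
  assert (nlt_le: forall a b, ~ lt a b -> Defs.le W lt b a).
  { intros a b H. destruct (Htri a b) as [h|[h|h]]; unfold Defs.le; auto. contradiction. }
  assert (nle_lt: forall a b, ~ Defs.le W lt a b -> lt b a).
  { intros a b H. destruct (Htri a b) as [h|[h|h]]; unfold Defs.le in *; tauto. }
  destruct Hcf as [[g [Hg1 Hg2]] Hmin].
  destruct Hunc as [[x0 Hx0] Hnc].
  destruct (Hg2 x0 Hx0) as [i0 [Hi0 _]].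
  assert (Hpsi: forall b, exists i, lt i delta /\ (lt b zeta -> Defs.le W lt b (g i) /\
      forall j, lt j i -> ~ Defs.le W lt b (g j))).
  { intros b. destruct (classic (lt b zeta)) as [Hb|Hb].
    - destruct (wf_min W lt Hwf (fun i => lt i delta /\ Defs.le W lt b (g i))) as [m [[Hm1 Hm2] Hm3]].
      { destruct (Hg2 b Hb) as [i [? ?]]; eauto. }
      + exists m. split; auto. intros _. split; auto. intros j Hj Hle. apply (Hm3 j Hj). split; eauto.
    - exists i0. split; [auto|]. intros; contradiction. }
  set (psi := fun b => proj1_sig (constructive_indefinite_description _ (Hpsi b))).
  assert (Hpsi_spec: forall b, lt (psi b) delta /\ (lt b zeta -> Defs.le W lt b (g (psi b)) /\
      forall j, lt j (psi b) -> ~ Defs.le W lt b (g j))).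
  { intro b; unfold psi; destruct (constructive_indefinite_description _ _); simpl; auto. }
  clearbody psi.
  assert (psi_mono: forall b b', Defs.le W lt b b' -> lt b' zeta -> Defs.le W lt (psi b) (psi b')).
  { intros b b' Hbb Hb'. destruct (Hpsi_spec b) as [_ Hb]. destruct (Hpsi_spec b') as [_ Hb''].
    assert (lt b zeta) by eauto. destruct (Hb H) as [_ Hm]. destruct (Hb'' Hb') as [Hle _].
    apply nlt_le. intro Hlt. apply (Hm _ Hlt). eauto. }
  assert (psi_unb: forall b, lt b zeta -> exists b', lt b' zeta /\ lt (psi b) (psi b')).
  { intros b Hb. apply NNPP. intro Hn.
    assert (Hall: forall b', lt b' zeta -> Defs.le W lt (psi b') (psi b)).
    { intros b' Hb'. apply nlt_le. intro. apply Hn. eauto. }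
    destruct (classic (exists j, lt j (psi b))) as [[j0 Hj0]|Hnj].
    - apply (Hmin (psi b) (proj1 (Hpsi_spec b))).
      exists (fun j => if excluded_middle_informative (lt (g j) (g (psi b))) then g (psi b) else g j).
      split.
      + intros j Hj. destruct excluded_middle_informative; apply Hg1.
        * apply Hpsi_spec.
        * apply (Htr _ _ _ Hj). apply Hpsi_spec.
      + intros x Hx. destruct (Hpsi_spec x) as [_ Hx']. destruct (Hx' Hx) as [Hxg _].
        destruct (Hall x Hx) as [Hlt|Heq].
        * exists (psi x). split; [exact Hlt|]. destruct excluded_middle_informative.
          -- apply lele with (g (psi x)); auto. left; auto.
          -- auto.
        * exists j0. split; auto. rewrite Heq in Hxg. destruct excluded_middle_informative.
          exact Hxg. apply lele with (g (psi b)); auto.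
    - apply Hnc. exists (fun _ => g (psi b)). split.
      + intros; apply Hg1; apply Hpsi_spec.
      + intros x Hx. exists 0. destruct (Hall x Hx) as [Hlt|Heq].
        * exfalso; eauto.
        * destruct (Hpsi_spec x) as [_ H']. rewrite <- Heq. apply (H' Hx). }
  exists psi. split. { intro; apply Hpsi_spec. }
  intros alpha Hcfa f s [Hsa Hst] Hinc [Hconv1 Hconv2].
  assert (tail: forall y, lt y alpha -> club W lt alpha (fun w => Defs.le W lt y w /\ lt w alpha)).
  { intros y Hy. split; [|split].
    - intros x [_ H]; exact H.
    - intros x Hx. destruct (classic (lt x y)).
      + exists y; split; [split; [right; reflexivity|auto]| split; [left; auto|auto]].
      + exists x; split; [split; [apply nlt_le; auto | auto] | split; [right; reflexivity|auto]].
    - intros gam Hgam [x Hx] Hcof. destruct (Hcof x Hx) as [w [[Hyw _] [_ Hwg]]].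
      split; [left; eauto | auto]. }
  destruct (classic (exists y, s y /\ f y = zeta)) as [[y [Hys Hfy]]|Hno].
  - exists (fun w => Defs.le W lt y w /\ lt w alpha). split. { apply tail; auto. }
    intros x x' [[Hyx _] Hxs] [[_ _] Hx's] Hxx'. exfalso.
    assert (H: lt y x') by eauto.
    pose proof (Hinc y x' Hys Hx's H) as H2. rewrite Hfy in H2.
    exact (notle _ _ H2 (Hconv1 x' Hx's)).
  - assert (Hfz: forall x, s x -> lt (f x) zeta).
    { intros x Hx. destruct (Hconv1 x Hx); auto. exfalso; eauto. }
    assert (Hstep: forall z, exists z', s z -> s z' /\ lt z z' /\ lt (psi (f z)) (psi (f z'))).
    { intros z. destruct (classic (s z)) as [Hz|Hz]; [|exists z; intros; contradiction].
      destruct (psi_unb (f z) (Hfz z Hz)) as [b' [Hb' Hlt]].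
      destruct (Hconv2 b' Hb') as [x [Hxs Hbx]].
      assert (Hl: lt (psi (f z)) (psi (f x))).
      { eapply ltle; [exact Hlt| apply psi_mono; [left; auto | auto]]. }
      exists x. intros _. split; auto. split; auto.
      destruct (Htri z x) as [H|[H|H]]; auto.
      - subst. exfalso; eapply Hirr; eauto.
      - exfalso. apply (notle _ _ Hl). apply psi_mono. left; apply Hinc; auto. apply Hfz; auto. }
    set (c := fun gam => lt gam alpha /\ forall x, s x -> lt x gam ->
               exists z, s z /\ lt z gam /\ lt (psi (f x)) (psi (f z))).
    exists c. split.
    + split; [|split].
      * intros x [H _]; exact H.
      * intros x1 Hx1.
        destruct (Hst _ (tail x1 Hx1)) as [y0 [[Hx1y0 _] Hy0s]].
        set (nx := fun z => proj1_sig (constructive_indefinite_description _ (Hstep z))).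
        assert (Hnx: forall z, s z -> s (nx z) /\ lt z (nx z) /\ lt (psi (f z)) (psi (f (nx z)))).
        { intro z; unfold nx; destruct (constructive_indefinite_description _ _); simpl; auto. }
        clearbody nx.
        set (zs := fun n => nat_rect (fun _ => W) y0 (fun _ w => nx w) n).
        assert (Hzs: forall n, s (zs n)).
        { induction n; simpl; auto. apply (Hnx _ IHn). }
        assert (Hzinc: forall n, lt (zs n) (zs (S n)) /\
                  lt (psi (f (zs n))) (psi (f (zs (S n))))).
        { intro n. apply (Hnx _ (Hzs n)). }
        assert (Hz0: zs 0 = y0) by reflexivity.
        clearbody zs.
        assert (Hbd: exists x, lt x alpha /\ forall n, lt (zs n) x).
        { apply NNPP; intro Hn. apply Hnc. exists (fun n => f (zs n)). split.
          { intros; apply Hfz; auto. }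
          intros y Hy. destruct (Hconv2 y Hy) as [x [Hxs Hyx]].
          assert (H: exists n, Defs.le W lt x (zs n)).
          { apply NNPP; intro Hn2. apply Hn. exists x. split; auto. intros n.
            apply nle_lt. intro; apply Hn2; eauto. }
          destruct H as [n Hn']. exists n. left. eapply ltle; [exact Hyx|].
          destruct Hn' as [H|H]; [left; apply Hinc; auto | subst; right; auto]. }
        destruct Hbd as [xb [Hxb Hxbz]].
        destruct (wf_min W lt Hwf (fun w => forall n, lt (zs n) w)) as [gam [Hgam Hgmin]].
        { exists xb; auto. }
        exists gam.
        assert (Hgx: Defs.le W lt gam xb).
        { apply nlt_le. intro H. exact (Hgmin xb H Hxbz). }
        split; [|split].
        -- split. { eapply lelt; eauto. }
           intros x Hxs Hxg.
           assert (H: exists n, Defs.le W lt x (zs n)).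
           { apply NNPP; intro Hn. apply (Hgmin x Hxg). intro n. apply nle_lt.
             intro; apply Hn; eauto. }
           destruct H as [n Hn]. exists (zs (S n)). split; auto. split; auto.
           apply lelt with (psi (f (zs n))).
           ++ apply psi_mono.
              ** destruct Hn as [Hn|Hn]; [left; apply Hinc; auto|subst; right; auto].
              ** apply Hfz; auto.
           ++ apply Hzinc.
        -- left. apply lelt with y0; auto. rewrite <- Hz0; apply (Hgam 0).
        -- eapply lelt; eauto.
      * intros gam Hgam _ Hcof. split; auto. intros x Hxs Hxg.
        destruct (Hcof x Hxg) as [y [[_ Hy] [Hxy Hyg]]].
        destruct (Hy x Hxs Hxy) as [z [Hzs [Hzy Hpz]]]. exists z; eauto.
    + intros x y [[_ _] Hxs] [[_ Hy] Hys] Hxy.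
      destruct (Hy x Hxs Hxy) as [z [Hzs [Hzy Hpz]]].
      eapply ltle; [exact Hpz|]. apply psi_mono.
      * left; apply Hinc; auto.
      * apply Hfz; auto.
Qed.
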